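(* Let $G$ be a finite-horizon two-player zero-sum sequential game with horizon $T$, let $\epsilon>0$ and $\alpha>0$, and let $\rho$ be a reference policy with $\rho(h_\iota)(a)\ge\epsilon$ for every AOH $h_\iota$ and every action $a\in\mathbb A$. Let $\mathfrak J$ be the MiniMaxKL objective with reference policy $\rho$ and regularization parameter $\alpha$, and let $\pi^\ast$ be the equilibrium of $G$ under $\mathfrak J$. Then the (unregularized) exploitability of $\pi^\ast$ satisfies $\text{expl}(\pi^\ast)\le\alpha T|\log\epsilon|$.
   Context: A finite-horizon two-player zero-sum sequential game consists of: players $i\in\{0,1\}$; a finite action set $\mathbb{A}$; a set of histories $\mathbb{H}$, at each of which exactly one player $\iota$ acts; each history $h$ determines each player's action-observation history (AOH) $h_i$ (perfect recall); an initial history distribution; a reward $\mathcal{R}:\mathbb{H}\times\mathbb{A}\to\mathbb{R}$ (player 0 gets $\mathcal R$, player 1 gets $-\mathcal R$); a transition function $\mathcal{T}:\mathbb{H}\times\mathbb{A}\to\Delta(\mathbb{H})$; and a horizon $T$. $h_\iota$ denotes the acting player's AOH at $h$. A policy of $i$ maps its AOHs to $\Delta(\mathbb A)$; a reference policy $\rho$ maps every AOH to a distribution over $\mathbb A$. The MiniMaxKL objective is $\mathfrak{J}(\pi_0,\pi_1)=\mathbb{E}[\sum_{t=0}^{T-1}\mathfrak{R}(H^t,A^t,\pi(H^t_\iota))\mid\pi_0,\pi_1]$ with $\mathfrak R(h,a,\delta)=\mathcal R(h,a)-\alpha\,\mathrm{KL}(\delta,\rho(h_\iota))$ if player 0 acts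 at $h$ and $\mathfrak R(h,a,\delta)=\mathcal R(h,a)+\alpha\,\mathrm{KL}(\delta,\rho(h_\iota))$ if player 1 acts, where $\pi(H^t_\iota)$ is the acting player's action distribution; player 0 maximizes and player 1 minimizes, and an equilibrium is a saddle point of $\mathfrak J$. The unregularized objective is $\mathcal J(\pi_0,\pi_1)=\mathbb{E}[\sum_{t=0}^{T-1}\mathcal R(H^t,A^t)\mid\pi_0,\pi_1]$, and the exploitability of $\pi=(\pi_0,\pi_1)$ is $\text{expl}(\pi)=\frac12\big(-\min_{\pi_1'}\mathcal J(\pi_0,\pi_1')+\max_{\pi_0'}\mathcal J(\pi_0',\pi_1)\big)$. *)

(* Defs.v *)
From HB Require Import structures.
From mathcomp Require Import all_boot all_order all_algebra.
From mathcomp Require Import all_classical all_reals all_analysis.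
Set Implicit Arguments. Unset Strict Implicit. Unset Printing Implicit Defensive.
Import Order.TTheory GRing.Theory Num.Theory.
Local Open Scope classical_set_scope.
Local Open Scope ring_scope.

(** A finite two-player zero-sum sequential game (without horizon).
    Players are booleans: [false] = player 0 (maximizer),
    [true] = player 1 (minimizer). *)
Record game (R : realType) := Game {
  hist : finType;
  act : finType;
  aoh_t : finType;
  actor : hist -> bool;
  aoh : bool -> hist -> aoh_t;
  init : hist -> R;
  rew : hist -> act -> R;             (* reward R(h,a) for player 0 *)
  trans : hist -> act -> hist -> R
}.

Arguments actor {R} g _.
Arguments aoh {R} g _ _.
Arguments init {R} g _.
Arguments rew {R} g _ _.
Arguments trans {R} g _ _ _.

Section Game.
Variables (R : realType) (G : game R).

Definition is_dist (T : finType) (p : T -> R) : Prop :=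
  (forall x, 0 <= p x) /\ \sum_(x : T) p x = 1.

Definition wf_game : Prop :=
  is_dist (init G) /\ forall h a, is_dist (trans G h a).

Definition policy := aoh_t G -> act G -> R.
Definition is_policy (pi : policy) : Prop := forall o, is_dist (pi o).

Definition pi_at (pi0 pi1 : policy) (h : hist G) : act G -> R :=
  (if actor G h then pi1 else pi0) (aoh G (actor G h) h).

Fixpoint hist_dist (pi0 pi1 : policy) (t : nat) : hist G -> R :=
  match t with
  | 0 => init G
  | t'.+1 => fun h' => \sum_(h : hist G) \sum_(a : act G)
        hist_dist pi0 pi1 t' h * pi_at pi0 pi1 h a * trans G h a h'
  end.

Definition expected_return (T : nat) (r : hist G -> act G -> (act G -> R) -> R)
    (pi0 pi1 : policy) : R :=
  \sum_(t < T) \sum_(h : hist G) \sum_(a : act G)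
     hist_dist pi0 pi1 t h * pi_at pi0 pi1 h a * r h a (pi_at pi0 pi1 h).

Definition KL (d q : act G -> R) : R :=
  \sum_(a : act G) (if d a == 0 then 0 else d a * ln (d a / q a)).

Definition reg_reward (alpha : R) (rho : policy)
    (h : hist G) (a : act G) (d : act G -> R) : R :=
  if actor G h then rew G h a + alpha * KL d (rho (aoh G (actor G h) h))
  else rew G h a - alpha * KL d (rho (aoh G (actor G h) h)).

Definition J_reg (T : nat) (alpha : R) (rho : policy) (pi0 pi1 : policy) : R :=
  expected_return T (reg_reward alpha rho) pi0 pi1.

Definition J_unreg (T : nat) (pi0 pi1 : policy) : R :=
  expected_return T (fun h a _ => rew G h a) pi0 pi1.

Definition is_equilibrium (T : nat) (alpha : R) (rho : policy)
    (pi0 pi1 : policy) : Prop :=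
  is_policy pi0 /\ is_policy pi1 /\
  forall p0 p1, is_policy p0 -> is_policy p1 ->
    J_reg T alpha rho p0 pi1 <= J_reg T alpha rho pi0 pi1 /\
    J_reg T alpha rho pi0 pi1 <= J_reg T alpha rho pi0 p1.

Definition exploitability (T : nat) (pi0 pi1 : policy) : \bar R :=
  ((ereal_sup [set (J_unreg T p0 pi1)%:E | p0 in [set p | is_policy p]]
    - ereal_inf [set (J_unreg T pi0 p1)%:E | p1 in [set p | is_policy p]])
   * (2^-1)%:E)%E.

End Game.

(* Main.v *)
Require Import Defs.
From HB Require Import structures.
From mathcomp Require Import all_boot all_order all_algebra.
From mathcomp Require Import all_classical all_reals all_analysis.
From mathcomp Require Import lra.
Import Order.TTheory GRing.Theory Num.Theory.
Local Open Scope ring_scope.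

Section Aux.
Variables (R : realType) (G : game R).

Lemma dist_le1 (T : finType) (p : T -> R) x : is_dist p -> p x <= 1.
Proof.
case=> p0 <-; rewrite (bigD1 x) //= lerDl sumr_ge0 //.
Qed.

Lemma KL_bounds (d q : act G -> R) (eps : R) : 0 < eps ->
  is_dist d -> is_dist q -> (forall a, eps <= q a) ->
  0 <= KL d q <= - ln eps.
Proof.
move=> e0 [d0 d1] [q0 q1] qe; apply/andP; split.
- have : \sum_a (d a - q a) <= KL d q.
    rewrite /KL; apply: ler_sum => a _.
    case: eqP => [->|/eqP dn0]; first by rewrite sub0r oppr_le0.
    have dp : 0 < d a by rewrite lt_def dn0 d0.
    have qp : 0 < q a by apply: lt_le_trans (qe a).
    have h1 : ln (q a / d a) <= q a / d a - 1.
      have := @le_ln1Dx R (q a / d a - 1).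
      rewrite [1 + _]addrC subrK; apply.
      by rewrite ltrBrDl addrC addNr divr_gt0.
    have -> : ln (d a / q a) = - ln (q a / d a).
      by rewrite -lnV ?posrE ?divr_gt0 // invf_div.
    rewrite mulrN lerNr.
    apply: (le_trans (ler_wpM2l (d0 a) h1)).
    rewrite mulrBr mulr1 mulrCA divff ?mulr1; last by rewrite gt_eqF.
    by rewrite opprB.
  by rewrite sumrB d1 q1 subrr.
- rewrite -[X in _ <= X]mul1r -d1 mulr_suml; apply: ler_sum => a _.
  case: eqP => [->|/eqP dn0]; first by rewrite mul0r.
  have dp : 0 < d a by rewrite lt_def dn0 d0.
  have qp : 0 < q a by apply: lt_le_trans (qe a).
  apply: ler_wpM2l; first exact: d0.
  rewrite -lnV ?posrE // ler_ln ?posrE ?divr_gt0 ?invr_gt0 //.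
  apply: (@le_trans _ _ (1 * (q a)^-1)).
    apply: ler_wpM2r; first by rewrite invr_ge0 ltW.
    exact: dist_le1.
  by rewrite mul1r lef_pV2 ?posrE.
Qed.

Lemma pi_at_dist p0 p1 h : is_policy p0 -> is_policy p1 ->
  is_dist (@pi_at R G p0 p1 h).
Proof. by rewrite /pi_at => H0 H1; case: actor. Qed.
Arguments pi_at_dist {p0 p1} h.

Lemma hist_dist_dist p0 p1 t : wf_game G -> is_policy p0 -> is_policy p1 ->
  is_dist (@hist_dist R G p0 p1 t).
Proof.
move=> [Hi Ht] H0 H1; elim: t => [|t [IH0 IH1]] //=; split.
- move=> h'; apply: sumr_ge0 => h _; apply: sumr_ge0 => a _.
  apply: mulr_ge0; first apply: mulr_ge0 => //.
  + by case: (pi_at_dist h H0 H1).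
  + by case: (Ht h a).
- rewrite exchange_big /=.
  rewrite -[RHS]IH1; apply: eq_bigr => h _.
  rewrite exchange_big /=.
  rewrite -[RHS]mulr1; have [_ <-] := pi_at_dist h H0 H1; rewrite mulr_sumr.
  apply: eq_bigr => a _.
  by rewrite -mulr_sumr; case: (Ht h a) => _ ->; rewrite mulr1.
Qed.
Arguments hist_dist_dist {p0 p1} t.

Lemma sum3_diff (I J K : finType) (f g w : I -> J -> K -> R) :
  (forall i j k, `|f i j k - g i j k| <= w i j k) ->
  `|\sum_i \sum_j \sum_k f i j k - \sum_i \sum_j \sum_k g i j k|
    <= \sum_i \sum_j \sum_k w i j k.
Proof.
move=> H; rewrite -sumrB; apply: le_trans (ler_norm_sum _ _ _) _.
apply: ler_sum => i _; rewrite -sumrB; apply: le_trans (ler_norm_sum _ _ _) _.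
apply: ler_sum => j _; rewrite -sumrB; apply: le_trans (ler_norm_sum _ _ _) _.
by apply: ler_sum => k _.
Qed.

Lemma J_close (T : nat) (eps alpha : R) (rho p0 p1 : policy G) :
  wf_game G -> 0 < eps -> 0 < alpha -> is_policy rho ->
  (forall (h : hist G) (a : act G), eps <= rho (aoh G (actor G h) h) a) ->
  is_policy p0 -> is_policy p1 ->
  `|J_unreg T p0 p1 - J_reg T alpha rho p0 p1| <= alpha * T%:R * `|ln eps|.
Proof.
move=> wf e0 a0 Hr He H0 H1.
rewrite /J_unreg /J_reg /expected_return.
set c := alpha * `|ln eps|.
apply: le_trans (@sum3_diff _ _ _
   (fun (t : 'I_T) (h : hist G) (a : act G) => hist_dist p0 p1 t h * pi_at p0 p1 h a * rew G h a)
   (fun (t : 'I_T) (h : hist G) (a : act G) => hist_dist p0 p1 t h * pi_at p0 p1 h a *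
                   reg_reward alpha rho h a (pi_at p0 p1 h))
   (fun (t : 'I_T) (h : hist G) (a : act G) => hist_dist p0 p1 t h * pi_at p0 p1 h a * c) _) _.
- move=> t h a; rewrite -mulrBr normrM ger0_norm; last first.
    apply: mulr_ge0; first by case: (hist_dist_dist t wf H0 H1).
    by case: (pi_at_dist h H0 H1).
  apply: ler_wpM2l.
    apply: mulr_ge0; first by case: (hist_dist_dist t wf H0 H1).
    by case: (pi_at_dist h H0 H1).
  have /andP [k0 k1] := KL_bounds _ _ _ e0 (pi_at_dist h H0 H1) (Hr _) (He h).
  have k2 : - ln eps <= `|ln eps| by rewrite -normrN ler_norm.
  rewrite /reg_reward /c; move: k0 k1; set K := KL _ _ => k0 k1.
  have aK : 0 <= alpha * K by rewrite mulr_ge0 // ltW.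
  have aKle : alpha * K <= alpha * `|ln eps|.
    by apply: ler_wpM2l; [exact: ltW | exact: le_trans k2].
  case: actor.
  + by rewrite opprD addrA subrr sub0r normrN ger0_norm.
  + by rewrite opprB addrC subrK ger0_norm.
- rewrite (eq_bigr (fun _ => c)); last first.
    move=> t _.
    rewrite (eq_bigr (fun h => hist_dist p0 p1 t h * c)); last first.
      move=> h _; rewrite -mulr_suml -mulr_sumr.
      by case: (pi_at_dist h H0 H1) => _ ->; rewrite mulr1.
    by rewrite -mulr_suml; case: (hist_dist_dist t wf H0 H1) => _ ->; rewrite mul1r.
  rewrite sumr_const card_ord /c -mulr_natl; lra.
Qed.

End Aux.

Theorem proposition5p13 (R : realType) (G : game R) (T : nat)
    (eps alpha : R) (rho : policy G) (pi0 pi1 : policy G) :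
  wf_game G -> 0 < eps -> 0 < alpha -> is_policy rho ->
  (forall (h : hist G) (a : act G), eps <= rho (aoh G (actor G h) h) a) ->
  is_equilibrium T alpha rho pi0 pi1 ->
  (exploitability T pi0 pi1 <= (alpha * T%:R * `|ln eps|)%:E)%E.
Proof.
move=> wf e0 a0 Hr He [H0 [H1 Heq]].
set U := alpha * T%:R * `|ln eps|.
set c := J_reg T alpha rho pi0 pi1.
have C1 : forall p0, is_policy p0 -> J_unreg T p0 pi1 <= c + U.
  move=> p0 Hp.
  have := @J_close _ _ T eps alpha rho p0 pi1 wf e0 a0 Hr He Hp H1.
  have [Hle _] := Heq p0 pi1 Hp H1.
  move=> /(le_trans (ler_norm _)) H; rewrite -/U in H; rewrite /c; lra.
have C2 : forall p1, is_policy p1 -> c - U <= J_unreg T pi0 p1.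
  move=> p1 Hp.
  have := @J_close _ _ T eps alpha rho pi0 p1 wf e0 a0 Hr He H0 Hp.
  have [_ Hle] := Heq pi0 p1 H0 Hp.
  rewrite -normrN opprB => /(le_trans (ler_norm _)) H; rewrite -/U in H; rewrite /c; lra.
rewrite /exploitability.
have Hs : (ereal_sup [set (J_unreg T p0 pi1)%:E | p0 in [set p | is_policy p]]
           <= (c + U)%:E)%E.
  by apply: ge_ereal_sup => _ [p Hp <-]; rewrite lee_fin; exact: C1.
have Hi : ((c - U)%:E <=
   ereal_inf [set (J_unreg T pi0 p1)%:E | p1 in [set p | is_policy p]])%E.
  by apply: le_ereal_inf_tmp => _ [p Hp <-]; rewrite lee_fin; exact: C2.
apply: le_trans (lee_wpmul2r _ (leeB Hs Hi)) _.
  by rewrite lee_fin invr_ge0.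
by rewrite -EFinB -EFinM lee_fin; lra.
Qed.
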